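(* Consider the kernel setting described in the context, with the quantities $A,a,\gamma_a,B,b,\gamma_b$ defined there, and the optimization problem $$\max_{\theta\in\mathbb{R}^M}\ \theta^\top A\theta-2a^\top\theta+\gamma_a\quad\text{s.t.}\quad \theta^\top B\theta-2b^\top\theta+\gamma_b\le\varepsilon. \qquad (\star)$$ Assume $B$ is positive definite, and assume $\hat a\not\perp Z$, where $\hat a=2a-2AB^{-1}b$ and $Z$ is the eigenspace of the generalized eigenvalue problem for $A$ and $-B$ (i.e. $Az=\alpha(-B)z$) corresponding to its rightmost generalized eigenvalue. Let $\hat A=-2A$, $\hat\varepsilon=\sqrt{\varepsilon+b^\top B^{-1}b-\gamma_b}$, and $\|v\|_B=\sqrt{v^\top Bv}$. Let $\alpha^*$ be the smallest eigenvalue of the $2M\times 2M$ generalized eigenvalue problem $$\begin{pmatrix}-B&\hat A\\ \hat A&-\frac{\hat a\hat a^\top}{\hat\varepsilon^2}\end{pmatrix}\begin{pmatrix}z_1\\ z_2\end{pmatrix}=\alpha^*\begin{pmatrix}O&B\\ B&O\end{pmatrix}\begin{pmatrix}z_1\\ z_2\end{pmatrix},$$ with corresponding eigenvector $(z_1,z_2)$, $z_1,z_2\in\mathbb{R}^M$. Set $\hat\theta_{\mathrm{opt}}=-\operatorname{sgn}(\hat a^\top z_2)\,\hat\varepsilon\,z_1/\|z_1\|_B$ and $\theta_{\mathrm{opt}}=\hat\theta_{\mathrm{opt}}+B^{-1}b$. Then $\theta_{\mathrm{opt}}$ is a global optimum of $(\star)$ (equivalently, $\hat\theta_{\mathrm{opt}}$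 is a global optimum of $\min_{\|\hat\theta\|_B\le\hat\varepsilon}\frac12\hat\theta^\top\hat A\hat\theta+\hat a^\top\hat\theta$).
   Context: Kernel setting (BODAME–KRR/KR). Let $\mathcal{X}$ be an input space, $k^*$ and $k_h$ positive-definite kernels on $\mathcal{X}$, and $\lambda>0$, $\varepsilon\ge 0$. The defender's true model is $f(x)=\sum_{s=1}^M\theta^*_s k^*(x,x^{\mathrm{tr}}_s)$ with $\theta^*\in\mathbb{R}^M$ and training points $x^{\mathrm{tr}}_1,\dots,x^{\mathrm{tr}}_M$; the surrogate model is $g_\theta(x)=\sum_{s=1}^M\theta_s k^*(x,x^{\mathrm{tr}}_s)$. The attacker has samples $x^{\mathrm{a}}_1,\dots,x^{\mathrm{a}}_n$ and fits by kernel ridge regression with kernel $k_h$ and regularization $\lambda$, giving parameter $(K_1+\lambda I_n)^{-1}K_2\theta$. The defender has objective samples $x^{\mathrm{obj}}_1,\dots,x^{\mathrm{obj}}_m$ and constraint samples $x^{\mathrm{con}}_1,\dots,x^{\mathrm{con}}_{m'}$. Define $K_1=(k_h(x^{\mathrm{a}}_i,x^{\mathrm{a}}_{i'}))_{i,i'}\in\mathbb{R}^{n\times n}$, $K_2=(k^*(x^{\mathrm{a}}_i,x^{\mathrm{tr}}_s))_{i,s}\in\mathbb{R}^{n\times M}$, $K_3=(k_h(x^{\mathrm{obj}}_j,x^{\mathrm{a}}_i))_{j,i}\in\mathbb{R}^{m\times n}$, $K_4=(k^*(x^{\mathrm{con}}_{j'},x^{\mathrm{tr}}_s))_{j',s}\in\mathbb{R}^{m'\times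 M}$, $f_1=(f(x^{\mathrm{obj}}_j))_{j=1}^m$, $f_2=(f(x^{\mathrm{con}}_{j'}))_{j'=1}^{m'}$, $\tilde A=K_3(K_1+\lambda I_n)^{-1}K_2$, $A=\frac1m\tilde A^\top\tilde A$, $a=\frac1m\tilde A^\top f_1$, $\gamma_a=\frac1m f_1^\top f_1$, $B=\frac1{m'}K_4^\top K_4$, $b=\frac1{m'}K_4^\top f_2$, $\gamma_b=\frac1{m'}f_2^\top f_2$. The function $\operatorname{sgn}(x)$ equals $1$ if $x>0$ and $-1$ if $x\le 0$. *)

(* Defs.v *)
From mathcomp Require Import all_boot all_order all_algebra.
From mathcomp Require Export reals.
Set Implicit Arguments. Unset Strict Implicit. Unset Printing Implicit Defensive.
Import Order.TTheory GRing.Theory Num.Theory.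
Local Open Scope ring_scope.

Definition pd_kernel (R : realType) (X : Type) (k : X -> X -> R) : Prop :=
  (forall x y, k x y = k y x) /\
  (forall (N : nat) (xs : 'I_N -> X) (c : 'I_N -> R),
      0 <= \sum_(i < N) \sum_(j < N) c i * c j * k (xs i) (xs j)).

Definition gram (R : realType) (X : Type) (k : X -> X -> R) (p q : nat)
  (xs : 'I_p -> X) (ys : 'I_q -> X) : 'M[R]_(p, q) :=
  \matrix_(i, j) k (xs i) (ys j).

Definition kexp (R : realType) (X : Type) (k : X -> X -> R) (M : nat)
  (xtr : 'I_M -> X) (th : 'cV[R]_M) (x : X) : R :=
  \sum_(s < M) th s 0 * k x (xtr s).

Definition evalv (R : realType) (X : Type) (g : X -> R) (p : nat)
  (xs : 'I_p -> X) : 'cV[R]_p := \col_j g (xs j).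

Definition qform (R : realType) (M : nat) (Q : 'M[R]_M) (v : 'cV[R]_M) : R :=
  (v^T *m Q *m v) 0 0.
Definition dotv (R : realType) (M : nat) (u v : 'cV[R]_M) : R := (u^T *m v) 0 0.

Definition normB (R : realType) (M : nat) (B : 'M[R]_M) (v : 'cV[R]_M) : R :=
  Num.sqrt (qform B v).

Definition sgn (R : realType) (x : R) : R := if 0 < x then 1 else -1.

Definition posdef (R : realType) (M : nat) (B : 'M[R]_M) : Prop :=
  B^T = B /\ forall v : 'cV[R]_M, v != 0 -> 0 < qform B v.

Definition geneig (R : realType) (p : nat) (P Q : 'M[R]_p) (alpha : R)
  (z : 'cV[R]_p) : Prop := z != 0 /\ P *m z = alpha *: (Q *m z).

(* Main.v *)
Require Import Defs.
From mathcomp Require Import all_boot all_order all_algebra.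
From mathcomp Require Import reals.
From mathcomp Require Import ring lra.
From mathcomp Require Import all_classical all_analysis.
Import Order.TTheory GRing.Theory Num.Theory.
Local Open Scope ring_scope.

Section Alg.
Context {R : realType}.
Context {n : nat}.
Implicit Types (Q S : 'M[R]_n) (u v x y : 'cV[R]_n).

Definition bil Q u v := (u^T *m Q *m v) 0 0.

Lemma qformE Q v : qform Q v = bil Q v v. Proof. by []. Qed.

Lemma bilE Q u v : bil Q u v = dotv u (Q *m v).
Proof. by rewrite /bil /dotv mulmxA. Qed.

Lemma dotvC u v : dotv u v = dotv v u.
Proof.
rewrite /dotv.
have -> : v^T *m u = (u^T *m v)^T by rewrite trmx_mul trmxK.
by rewrite [in RHS]mxE.
Qed.

Lemma dotvDl u1 u2 v : dotv (u1 + u2) v = dotv u1 v + dotv u2 v.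
Proof. by rewrite /dotv linearD /= mulmxDl mxE. Qed.
Lemma dotvDr u v1 v2 : dotv u (v1 + v2) = dotv u v1 + dotv u v2.
Proof. by rewrite /dotv mulmxDr mxE. Qed.
Lemma dotvZl a u v : dotv (a *: u) v = a * dotv u v.
Proof. by rewrite /dotv linearZ /= -scalemxAl mxE. Qed.
Lemma dotvZr a u v : dotv u (a *: v) = a * dotv u v.
Proof. by rewrite /dotv -scalemxAr mxE. Qed.
Lemma dotvNl u v : dotv (- u) v = - dotv u v.
Proof. by rewrite -scaleN1r dotvZl mulN1r. Qed.
Lemma dotvNr u v : dotv u (- v) = - dotv u v.
Proof. by rewrite -scaleN1r dotvZr mulN1r. Qed.
Lemma dotvBl u1 u2 v : dotv (u1 - u2) v = dotv u1 v - dotv u2 v.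
Proof. by rewrite dotvDl dotvNl. Qed.
Lemma dotvBr u v1 v2 : dotv u (v1 - v2) = dotv u v1 - dotv u v2.
Proof. by rewrite dotvDr dotvNr. Qed.
Lemma dotv0r u : dotv u 0 = 0.
Proof. by rewrite /dotv mulmx0 mxE. Qed.

Lemma dotv_mull Q u v : dotv (Q *m u) v = dotv u (Q^T *m v).
Proof. by rewrite /dotv trmx_mul mulmxA. Qed.

Lemma dotv_ge0 v : 0 <= dotv v v.
Proof.
rewrite /dotv mxE; apply: sumr_ge0 => i _; rewrite mxE -expr2; exact: sqr_ge0.
Qed.

Lemma dotv_eq0 v : dotv v v = 0 -> v = 0.
Proof.
rewrite /dotv mxE => /eqP; rewrite psumr_eq0; last first.
  by move=> i _; rewrite mxE -expr2; exact: sqr_ge0.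
move=> /allP H; apply/matrixP => i j; rewrite (ord1 j) mxE.
have := H i (mem_index_enum _); rewrite mxE => /eqP /eqP.
by rewrite mulf_eq0 orbb => /eqP.
Qed.

Lemma bil_sym Q u v : Q^T = Q -> bil Q u v = bil Q v u.
Proof. by move=> QT; rewrite !bilE [LHS]dotvC dotv_mull QT. Qed.

Lemma bilDl Q u1 u2 v : bil Q (u1 + u2) v = bil Q u1 v + bil Q u2 v.
Proof. by rewrite !bilE dotvDl. Qed.
Lemma bilDr Q u v1 v2 : bil Q u (v1 + v2) = bil Q u v1 + bil Q u v2.
Proof. by rewrite !bilE mulmxDr dotvDr. Qed.
Lemma bilZl Q a u v : bil Q (a *: u) v = a * bil Q u v.
Proof. by rewrite !bilE dotvZl. Qed.
Lemma bilZr Q a u v : bil Q u (a *: v) = a * bil Q u v.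
Proof. by rewrite !bilE -scalemxAr dotvZr. Qed.
Lemma bilNl Q u v : bil Q (- u) v = - bil Q u v.
Proof. by rewrite !bilE dotvNl. Qed.
Lemma bilNr Q u v : bil Q u (- v) = - bil Q u v.
Proof. by rewrite !bilE mulmxN dotvNr. Qed.
Lemma bilBl Q u1 u2 v : bil Q (u1 - u2) v = bil Q u1 v - bil Q u2 v.
Proof. by rewrite bilDl bilNl. Qed.
Lemma bilBr Q u v1 v2 : bil Q u (v1 - v2) = bil Q u v1 - bil Q u v2.
Proof. by rewrite bilDr bilNr. Qed.
Lemma bilMD Q S u v : bil (Q + S) u v = bil Q u v + bil S u v.
Proof. by rewrite !bilE mulmxDl dotvDr. Qed.
Lemma bilMZ Q a u v : bil (a *: Q) u v = a * bil Q u v.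
Proof. by rewrite !bilE -scalemxAl dotvZr. Qed.
Lemma bilMN Q u v : bil (- Q) u v = - bil Q u v.
Proof. by rewrite !bilE mulNmx dotvNr. Qed.

Definition psd Q := forall v, 0 <= bil Q v v.

Lemma psd_zero S v : S^T = S -> psd S -> bil S v v = 0 -> S *m v = 0.
Proof.
move=> ST Sp v0.
set y := S *m v.
have ha : bil S y v = dotv y y by rewrite bilE.
set a : R := dotv y y. set b : R := bil S y y.
have hb : 0 <= b by exact: Sp.
have := Sp ((b + 1) *: v - a *: y).
rewrite !(bilBl, bilBr, bilZl, bilZr) v0 ha (@bil_sym S v y ST) ha -/b.
move=> h.
have h' : 0 <= - (a * a * (b + 2)) by move: h; rewrite -/a; lra.
have ha0 : 0 <= a by exact: dotv_ge0.
have : a * a * (b + 2) <= 0 by nra.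
move=> h2; have a0 : a = 0 by nra.
by apply: dotv_eq0.
Qed.

Lemma psd_CS S x y : S^T = S -> psd S ->
  bil S x y ^+ 2 <= bil S x x * bil S y y.
Proof.
move=> ST Sp.
have [c0|cn0] := eqVneq (bil S y y) 0.
  have := @psd_zero S y ST Sp c0 => Sy.
  by rewrite bilE Sy dotv0r c0 expr0n /= mulr0.
have cpos : 0 < bil S y y by rewrite lt_def cn0 Sp.
have := Sp (bil S y y *: x - bil S x y *: y).
rewrite !(bilBl, bilBr, bilZl, bilZr) (@bil_sym S y x ST).
move=> h. nra.
Qed.

End Alg.

Section Det.
Context {R : realType}.

Lemma det_schur n (B P C : 'M[R]_n) : B \in unitmx ->
  \det (block_mx (-B) P P C) = \det (-B) * \det (C + P *m invmx B *m P).
Proof.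
move=> Bu.
have -> : block_mx (-B) P P C =
   block_mx 1%:M 0 (- (P *m invmx B)) 1%:M *m block_mx (-B) P 0 (C + P *m invmx B *m P).
  rewrite mulmx_block; congr block_mx.
  - by rewrite mul1mx mul0mx addr0.
  - by rewrite mul1mx mul0mx addr0.
  - by rewrite mulmx0 addr0 mulNmx mulmxN opprK -mulmxA mulVmx // mulmx1.
  - by rewrite mul1mx mulNmx addrC addrK.
by rewrite det_mulmx det_lblock det_ublock !det1 !mul1r.
Qed.

Lemma det_rank1 n (u v : 'cV[R]_n) : \det (1%:M + u *m v^T) = 1 + dotv v u.
Proof.
have e1 : (block_mx (1%:M : 'M[R]_1) (- v^T) u 1%:M) =
  block_mx 1%:M 0 u 1%:M *m block_mx 1%:M (- v^T) 0 (1%:M + u *m v^T).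
  rewrite mulmx_block; congr block_mx.
  - by rewrite mul1mx mul0mx addr0.
  - by rewrite mul1mx mul0mx addr0.
  - by rewrite mulmx1 mulmx0 addr0.
  - by rewrite mulmxN mul1mx addrC addrK.
have e2 : (block_mx (1%:M : 'M[R]_1) (- v^T) u 1%:M) =
  block_mx (1%:M + v^T *m u) (- v^T) 0 1%:M *m block_mx 1%:M 0 u 1%:M.
  rewrite mulmx_block; congr block_mx.
  - by rewrite mulmx1 mulNmx addrK.
  - by rewrite mulmx0 mulmx1 add0r.
  - by rewrite mul0mx add0r mul1mx.
  - by rewrite mul0mx add0r mulmx1.
have := congr1 determinant e2; rewrite {1}e1 !det_mulmx !det_lblock !det_ublock.
rewrite !det1 !mul1r !mulr1 => ->.
by rewrite det_mx11 mxE /dotv mxE.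
Qed.


Lemma det_pencil n (B P : 'M[R]_n) (g : 'cV[R]_n) (k : R) :
  B \in unitmx -> P \in unitmx -> P^T = P ->
  \det (block_mx (-B) P P (- (k *: (g *m g^T)))) =
  (-1) ^+ n * \det P ^+ 2 * (1 - k * bil B (invmx P *m g) (invmx P *m g)).
Proof.
move=> Bu Pu PT.
rewrite det_schur //.
set Q := P *m invmx B *m P.
set Y := invmx P *m B *m invmx P.
have QY : Q *m Y = 1%:M.
  by rewrite /Q /Y !mulmxA mulmxK // mulmxKV // mulmxV.
rewrite [X in _ * \det X](_ : _ = Q *m (1%:M + (- k *: (Y *m g)) *m g^T)); last first.
  rewrite mulmxDr mulmx1 -scalemxAl -scalemxAr mulmxA (mulmxA Q Y) QY mul1mx scaleNr.
  by rewrite addrC.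
rewrite det_mulmx det_rank1 dotvZr.
have -> : dotv g (Y *m g) = bil B (invmx P *m g) (invmx P *m g).
  by rewrite /bil /Y trmx_mul trmx_inv PT /dotv !mulmxA.
rewrite /Q !det_mulmx det_inv -scaleN1r detZ.
have dB : \det B != 0 by rewrite -unitfE -unitmxE.
set dP := \det P. set dB' := \det B.
field.
exact: dB.
Qed.

End Det.

Section Evt.
Import numFieldTopology.Exports numFieldNormedType.Exports Num.Def.
Local Open Scope classical_set_scope.
Context {R : realType}.

Lemma bil_cont n (Q : 'M[R]_n) :
  continuous (fun r : 'rV[R]_n => bil Q r^T r^T).
Proof.
have -> : (fun r : 'rV[R]_n => bil Q r^T r^T) =
   (fun r => \sum_j (\sum_i r 0 i * Q i j) * r 0 j).
  apply: boolp.funext => r; rewrite /bil !mxE; apply: eq_bigr => j _.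
  rewrite !mxE; congr (_ * _); apply: eq_bigr => i _; rewrite !mxE //.
apply: (@continuous_big _ _ +%R 0 xpredT add_continuous) => j _.
move=> x; apply: continuousM; last exact: coord_continuous.
apply: (@continuous_big _ _ +%R 0 xpredT add_continuous) => i _.
move=> y; apply: continuousM; first exact: coord_continuous.
exact: cst_continuous.
Qed.


Lemma bilZZ n (Q : 'M[R]_n) (a : R) (v : 'cV[R]_n) :
  bil Q (a *: v) (a *: v) = a ^+ 2 * bil Q v v.
Proof. by rewrite bilZl bilZr mulrA expr2. Qed.

Lemma rayleigh_min n (H B : 'M[R]_n) : (0 < n)%N -> H^T = H -> B^T = B ->
  (forall v, v != 0 -> 0 < bil B v v) ->
  exists mu (v0 : 'cV[R]_n), v0 != 0 /\ H *m v0 = mu *: (B *m v0) /\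
    forall v, mu * bil B v v <= bil H v v.
Proof.
move=> n0 HT BT Bpd.
pose qH := fun r : 'rV[R]_n => (bil H r^T r^T : R).
pose qB := fun r : 'rV[R]_n => (bil B r^T r^T : R).
pose qI := fun r : 'rV[R]_n => (bil 1%:M r^T r^T : R).
pose S := [set r : 'rV[R]_n | qI r = 1]%classic.
pose f := fun r => qH r / qB r.
have qIE : forall r, qI r = dotv r^T r^T by move=> r; rewrite /qI bilE mul1mx.
have Sne0 : forall r, S r -> r^T != 0.
  move=> r; rewrite /S /= qIE => h; apply/eqP => r0; move: h.
  by rewrite r0 dotv0r => /eqP; rewrite eq_sym oner_eq0.
have S0 : S !=set0.
  exists (delta_mx 0 (Ordinal n0)); rewrite /S /= qIE /dotv mxE.
  rewrite (bigD1 (Ordinal n0)) //= big1 ?addr0.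
    by rewrite !mxE !eqxx /= mulr1.
  by move=> j /negbTE jn; rewrite !mxE jn /= mulr0.
have cS : compact S.
  apply: bounded_closed_compact.
    exists 1; split; first by rewrite num_real.
    move=> M M1 r Sr /=; rewrite /normr /=.
    have [->|/mx_norm_neq0 [[i j] ->]] := eqVneq (mx_norm r) 0.
      by apply: ltW; apply: lt_trans M1.
    rewrite /= (ord1 i); apply: (le_trans _ (ltW M1)).
    have : r 0 j ^+ 2 <= 1.
      move: Sr; rewrite /S /= qIE /dotv mxE => <-.
      rewrite (bigD1 j) //= !mxE -expr2 lerDl.
      by apply: sumr_ge0 => k _; rewrite !mxE -expr2 sqr_ge0.
    by move=> h; rewrite -(@expr_le1 _ 2) // -normrX ger0_norm ?sqr_ge0.
  have : closed (qI @^-1` [set x | x = 1]).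
    apply: preimage_closed; last exact: closed_eq.
    move=> x _; exact: bil_cont.
  by move=> h'; exact: h'.
have cf : {within S, continuous f}.
  apply: continuous_in_subspaceT => r /set_mem Sr.
  apply: continuousM; first exact: bil_cont.
  apply: continuousV; last exact: bil_cont.
  by rewrite /qB gt_eqF // Bpd // Sne0.
have [c /set_mem Sc cmin] := EVT_min_rV S0 cS cf.
exists (f c), c^T; split; first exact: Sne0.
have key : forall v, f c * bil B v v <= bil H v v.
  move=> v; have [->|vn0] := eqVneq v 0.
    by rewrite !bilE !mulmx0 !dotv0r mulr0.
  have dpos : 0 < dotv v v.
    by rewrite lt_def dotv_ge0 andbT; apply/eqP => /dotv_eq0; apply/eqP.
  set s := Num.sqrt (dotv v v).
  have spos : 0 < s by rewrite sqrtr_gt0.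
  pose r := (s^-1 *: v)^T.
  have Sr : S r.
    rewrite /S /= qIE trmxK dotvZl dotvZr mulrA -expr2 exprVn sqr_sqrtr.
      by rewrite mulVf // gt_eqF.
    exact: ltW.
  have := cmin r (mem_set Sr).
  rewrite /f /qH /qB /r trmxK !bilZZ.
  have Bv : 0 < bil B v v by exact: Bpd.
  have s2 : 0 < s^-1 ^+ 2 by rewrite exprn_gt0 // invr_gt0.
  rewrite -mulf_div divff ?gt_eqF // mul1r ler_pdivlMr //.
have Bc : 0 < bil B c^T c^T by apply: Bpd; exact: Sne0.
split => //.
set mu := f c.
have psdS : psd (H - mu *: B).
  by move=> v; rewrite bilMD bilMN bilMZ subr_ge0.
have z0 : bil (H - mu *: B) c^T c^T = 0.
  rewrite bilMD bilMN bilMZ /mu /f /qH /qB.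
  by rewrite mulrAC -mulrA divff ?gt_eqF // mulr1 subrr.
have ST : (H - mu *: B)^T = H - mu *: B.
  by rewrite linearD /= linearN /= linearZ /= HT BT.
have := psd_zero _ _ ST psdS z0.
rewrite mulmxDl mulNmx -scalemxAl => /eqP.
by rewrite subr_eq0 => /eqP.
Qed.

End Evt.

Section Trs.
Context {R : realType}.

Lemma pd_eq0 {n} {P : 'M[R]_n} {v} : (forall v, v != 0 -> 0 < bil P v v) ->
  bil P v v = 0 -> v = 0.
Proof.
move=> Ppd h; apply/eqP; apply: contraT => /Ppd; by rewrite h ltxx.
Qed.

Lemma pd_unit {n} (P : 'M[R]_n) : P^T = P ->
  (forall v, v != 0 -> 0 < bil P v v) -> P \in unitmx.
Proof.
move=> PT Ppd; rewrite unitmxE unitfE; apply/negP => /det0P [r rn0 rP].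
have : P *m r^T = 0 by rewrite -{1}PT -trmx_mul rP trmx0.
move=> Pr.
have : bil P r^T r^T = 0 by rewrite bilE Pr dotv0r.
move/(pd_eq0 Ppd)/eqP; rewrite trmx_eq0; exact/negP.
Qed.

Lemma bilP_sym {n} (H B : 'M[R]_n) l : H^T = H -> B^T = B -> (H + l *: B)^T = H + l *: B.
Proof. by move=> HT BT; rewrite linearD /= linearZ /= HT BT. Qed.

Lemma bilP {n} (H B : 'M[R]_n) l u v : bil (H + l *: B) u v = bil H u v + l * bil B u v.
Proof. by rewrite bilMD bilMZ. Qed.


Lemma det_poly {p} (L Rm : 'M[R]_p) :
  {D : {poly R} | forall x, D.[x] = \det (L + x *: Rm)}.
Proof.
exists (\det (map_mx polyC L + 'X *: map_mx polyC Rm)) => x.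
rewrite -[LHS]/(horner_eval x _) -det_map_mx; congr (determinant _).
by apply/matrixP => i j; rewrite !mxE /= horner_evalE !hornerE.
Qed.

Lemma dotv0l {n} (u : 'cV[R]_n) : dotv 0 u = 0.
Proof. by rewrite dotvC dotv0r. Qed.
Lemma bil0r {n} (Q : 'M[R]_n) u : bil Q u 0 = 0.
Proof. by rewrite bilE mulmx0 dotv0r. Qed.
Lemma bil0l {n} (Q : 'M[R]_n) u : bil Q 0 u = 0.
Proof. by rewrite bilE dotv0l. Qed.

Lemma cV0_eq0 (v : 'cV[R]_0) : v = 0.
Proof. by apply/matrixP => -[]. Qed.


Lemma trs {n : nat} (H B : 'M[R]_n) (g : 'cV[R]_n) (Dl a0 als : R)
  (z : 'cV[R]_(n + n)) :
  H^T = H -> B^T = B -> (forall v, v != 0 -> 0 < bil B v v) ->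
  (forall v, bil H v v <= 0) -> 0 <= Dl ->
  (forall beta w, geneig H (- B) beta w -> beta <= a0) ->
  (exists w, H *m w = a0 *: (- B *m w) /\ dotv g w != 0) ->
  let L := block_mx (- B) H H (- ((Dl ^+ 2)^-1 *: (g *m g^T))) in
  let Rm := block_mx 0 B B 0 in
  geneig L Rm als z ->
  (forall beta w, geneig L Rm beta w -> als <= beta) ->
  let z1 : 'cV[R]_n := usubmx z in
  let z2 : 'cV[R]_n := dsubmx z in
  let x := - (sgn (dotv g z2) * Dl / normB B z1) *: z1 in
  bil B x x <= Dl ^+ 2 /\
  forall y, bil B y y <= Dl ^+ 2 -> bil H x x + 2 * dotv g x <= bil H y y + 2 * dotv g y.
Proof.
move=> HT BT Bpd Hnsd Dl0 a0max [w [Hw gw]] L Rm [zn0 Lz] alsmin z1 z2 x.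
have Bpsd : psd B.
  move=> v; have [->|vn0] := eqVneq v 0; last exact/ltW/Bpd.
  by rewrite bilE mulmx0 dotv0r.
have [D0|Dpos] := eqVneq Dl 0.
  have x0 : x = 0 by rewrite /x D0 mulr0 mul0r oppr0 scale0r.
  rewrite x0 D0 expr0n /= !bil0r; split=> [//|y yB].
  have : bil B y y = 0 by apply/le_anti; rewrite yB Bpsd.
  by move/(pd_eq0 Bpd) ->; rewrite !bil0r !dotv0r.
have {Dpos}Dpos : 0 < Dl by rewrite lt_def Dpos Dl0.
have wn0 : w != 0 by apply: contraNneq gw => ->; rewrite dotv0r.
have n0 : (0 < n)%N.
  move: wn0; apply: contraNT; rewrite -leqNgt leqn0 => /eqP n0.
  by apply/eqP/matrixP => -[i hi] j; exfalso; rewrite n0 in hi.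
pose P l := H + l *: B.
have PT l : (P l)^T = P l by exact: bilP_sym.
have [mu [v0 [v0n0 [Hv0 muB]]]] := @rayleigh_min R n H B n0 HT BT Bpd.
have mua0 : - mu <= a0.
  apply: (a0max _ v0); split => //.
  by rewrite mulNmx scaleNr scalerN opprK.
have K1 v : 0 <= bil (P a0) v v.
  rewrite bilP; have := muB v; have := Bpsd v; nra.
have Ppd l : a0 < l -> forall v, v != 0 -> 0 < bil (P l) v v.
  move=> al v vn0; have := K1 v; have := Bpd v vn0; rewrite !bilP; nra.
have Pu l : a0 < l -> P l \in unitmx.
  by move=> al; apply: pd_unit; [exact: PT | exact: Ppd].
have Pw : P a0 *m w = 0.
  by rewrite /P mulmxDl -scalemxAl Hw mulNmx scalerN addNr.
have Bu : B \in unitmx by apply: pd_unit.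
have PD l d : P (l + d) = P l + d *: B by rewrite /P scalerDl addrA.
set k := (Dl ^+ 2)^-1.
have kpos : 0 < k by rewrite invr_gt0 exprn_gt0.
have kDl : k * Dl ^+ 2 = 1 by rewrite mulVf // gt_eqF // exprn_gt0.
set G := dotv g w ^+ 2.
have Gpos : 0 < G by rewrite lt_def sqr_ge0 sqrf_eq0 gw.
set kw : R := bil B w w.
have kwpos : 0 < kw by exact: Bpd.
set eps := G / (2 * (kw * Dl ^+ 2 + G)).
have den : 0 < 2 * (kw * Dl ^+ 2 + G).
  by apply: mulr_gt0 => //; apply: ltr_wpDl => //; apply: mulr_ge0; [exact: ltW | exact: sqr_ge0].
have epspos : 0 < eps by apply: divr_gt0.
have epsE : eps * (2 * (kw * Dl ^+ 2 + G)) = G by rewrite mulfVK // gt_eqF.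
have eps1 : eps < 1.
  have : 0 <= kw * Dl ^+ 2 by apply: mulr_ge0; [exact: ltW | exact: sqr_ge0].
  nra.
have epsk : eps * (kw * Dl ^+ 2) < G.
  have : 0 <= kw * Dl ^+ 2 by apply: mulr_ge0; [exact: ltW | exact: sqr_ge0].
  nra.
set l1 := a0 + eps.
have al1 : a0 < l1 by rewrite /l1 ltrDl.
set u1 := invmx (P l1) *m g.
have Pu1 : P l1 *m u1 = g by rewrite /u1 mulKVmx //; exact: Pu.
have gwE : dotv g w = eps * bil B u1 w.
  rewrite -{1}Pu1 dotv_mull PT /l1 PD mulmxDl Pw add0r -scalemxAl dotvZr.
  by rewrite bilE.
set phi1 : R := bil B u1 u1.
have CS1 := psd_CS B u1 w BT Bpsd.
have phi1gt : Dl ^+ 2 < phi1.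
  have h1 : G <= eps ^+ 2 * (phi1 * kw).
    rewrite /G gwE exprMn; apply: ler_wpM2l; first exact: sqr_ge0.
    exact: CS1.
  rewrite ltNge; apply/negP => h2.
  have h3 : phi1 * kw <= Dl ^+ 2 * kw by apply: ler_wpM2r => //; exact: ltW.
  have h4 : eps ^+ 2 * (phi1 * kw) <= eps * (kw * Dl ^+ 2).
    have : eps ^+ 2 <= eps by rewrite expr2 ger_pMr // ltW.
    have : 0 <= phi1 * kw by apply: mulr_ge0; [exact: Bpsd | exact: ltW].
    nra.
  by have := le_lt_trans (le_trans h1 h4) epsk; rewrite ltxx.
set c := invmx B *m g.
set gam : R := bil B c c.
have gam0 : 0 <= gam by exact: Bpsd.
have Dl2pos : 0 < Dl ^+ 2 by rewrite exprn_gt0.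
set t := gam / Dl ^+ 2 + 1.
have tE : t * Dl ^+ 2 = gam + Dl ^+ 2.
  by rewrite /t mulrDl mulfVK ?mul1r // gt_eqF.
have t1 : 1 <= t by rewrite /t lerDr divr_ge0 // ltW.
set l2 := a0 + t.
have al2 : a0 < l2 by rewrite /l2 ltrDl (lt_le_trans ltr01).
set u2 := invmx (P l2) *m g.
have Pu2 : P l2 *m u2 = g by rewrite /u2 mulKVmx //; exact: Pu.
set phi2 : R := bil B u2 u2.
have phi20 : 0 <= phi2 by exact: Bpsd.
set d := dotv u2 g.
have dE1 : bil (P l2) u2 u2 = d by rewrite bilE Pu2.
have dE2 : bil (P l2) u2 u2 = bil (P a0) u2 u2 + t * phi2 by rewrite /l2 PD bilMD bilMZ.
have dE3 : d = bil B u2 c by rewrite bilE /c mulKVmx.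
have CS2 := psd_CS B u2 c BT Bpsd.
have tphi : t * phi2 <= d by rewrite -dE1 dE2 lerDr; exact: K1.
have phi2lt : phi2 < Dl ^+ 2.
  have [->|phi2n0] := eqVneq phi2 0; first by [].
  have phi2pos : 0 < phi2 by rewrite lt_def phi2n0.
  have h1 : (t * phi2) ^+ 2 <= phi2 * gam.
    rewrite -dE3 in CS2; apply: le_trans CS2.
    have tp0 : 0 <= t * phi2 by apply: mulr_ge0 => //; apply: le_trans t1.
    by rewrite ler_sqr ?nnegrE // (le_trans tp0 tphi).
  have h2 : t ^+ 2 * phi2 <= gam.
    rewrite -(ler_pM2r phi2pos); nra.
  have h3 : t * Dl ^+ 2 <= t ^+ 2 * Dl ^+ 2.
    nra.
  have h4 : t ^+ 2 * phi2 < t ^+ 2 * Dl ^+ 2 by lra.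
  by rewrite ltr_pM2l // in h4; rewrite exprn_gt0 // (lt_le_trans ltr01).
have LE l : L + l *: Rm = block_mx (- B) (P l) (P l) (- (k *: (g *m g^T))).
  rewrite /L /Rm scale_block_mx add_block_mx !scaler0 !addr0 //.
have Dform l : a0 < l -> \det (L + l *: Rm) = (-1) ^+ n * \det (P l) ^+ 2 *
    (1 - k * bil B (invmx (P l) *m g) (invmx (P l) *m g)).
  by move=> al; rewrite LE det_pencil ?PT ?Pu.
have [pD pDE] := det_poly L Rm.
pose p := (-1) ^+ n *: pD.
have pE l : a0 < l -> p.[l] = \det (P l) ^+ 2 *
    (1 - k * bil B (invmx (P l) *m g) (invmx (P l) *m g)).
  by move=> al; rewrite hornerZ pDE Dform // !mulrA -expr2 sqrr_sign mul1r.
have detpos l : a0 < l -> 0 < \det (P l) ^+ 2.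
  move=> al; rewrite lt_def sqr_ge0 sqrf_eq0 andbT -unitfE -unitmxE.
  exact: Pu.
have p1 : p.[l1] < 0.
  rewrite pE // pmulr_rlt0 ?detpos // subr_lt0.
  have : k * Dl ^+ 2 < k * phi1 by rewrite ltr_pM2l.
  by rewrite kDl.
have p2 : 0 < p.[l2].
  rewrite pE // pmulr_rgt0 ?detpos // subr_gt0.
  have : k * phi2 < k * Dl ^+ 2 by rewrite ltr_pM2l.
  by rewrite kDl.
have l12 : l1 <= l2 by rewrite lerD2l ltW // (lt_le_trans eps1 t1).
have [xr /andP [x1 x2] rt] := @poly_ivt R p l1 l2 l12 (introT andP (conj (ltW p1) (ltW p2))).
have Dx0 : \det (L + xr *: Rm) == 0.
  move: rt; rewrite /root /p hornerZ pDE mulf_eq0 signr_eq0 /=; done.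
have [r rn0 rM] := det0P Dx0.
have LT : (L + xr *: Rm)^T = L + xr *: Rm.
  rewrite LE tr_block_mx PT linearN /= BT linearN /= linearZ /= trmx_mul trmxK //.
have Lr : (L + xr *: Rm) *m r^T = 0 by rewrite -{1}LT -trmx_mul rM trmx0.
have gen : geneig L Rm (- xr) r^T.
  split; first by rewrite trmx_eq0.
  move: Lr; rewrite mulmxDl -scalemxAl => /eqP; rewrite addr_eq0 => /eqP ->.
  by rewrite scaleNr.
have alsx := alsmin _ _ gen.
set ls := - als.
have lsgt : a0 < ls.
  apply: (lt_le_trans al1); apply: (le_trans x1).
  by rewrite /ls lerNr.
have zE : z = col_mx z1 z2 by rewrite vsubmxK.
have := Lz; rewrite zE /L /Rm !mul_block_col scale_col_mx => /eq_col_mx [E1 E2].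
set s := dotv g z2.
have ggz : (g *m g^T) *m z2 = s *: g.
  by rewrite -mulmxA [g^T *m z2]mx11_scalar mul_mx_scalar.
have Hz2 : H *m z2 = als *: (B *m z2) + B *m z1.
  by move: E1; rewrite mul0mx add0r mulNmx => <-; rewrite [RHS]addrC addNKr.
have Hz1 : H *m z1 = als *: (B *m z1) + (k * s) *: g.
  move: E2; rewrite mul0mx addr0 mulNmx -scalemxAl ggz scalerA => <-.
  by rewrite subrK.
have Pz2 : P ls *m z2 = B *m z1.
  by rewrite /P mulmxDl -scalemxAl Hz2 /ls scaleNr addrAC subrr add0r.
have Pz1 : P ls *m z1 = (k * s) *: g.
  by rewrite /P mulmxDl -scalemxAl Hz1 /ls scaleNr addrAC subrr add0r.
have bz1 : bil B z1 z1 = k * s ^+ 2.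
  rewrite bilE -Pz2 -{1}(PT ls) -dotv_mull Pz1 dotvZl.
  by rewrite -mulrA -expr2.
have sn0 : s != 0.
  apply: contraNneq zn0 => s0.
  have z10 : z1 = 0 by apply: (pd_eq0 Bpd); rewrite bz1 s0 expr0n /= mulr0.
  have z20 : z2 = 0.
    apply: (pd_eq0 (Ppd ls lsgt)); rewrite bilE Pz2 z10 mulmx0 dotv0r //.
  by rewrite zE z10 z20 col_mx0.
have nz1 : normB B z1 = `|s| / Dl.
  rewrite /normB qformE bz1.
  have -> : k * s ^+ 2 = (s / Dl) ^+ 2 by rewrite exprMn exprVn mulrC.
  by rewrite sqrtr_sqr normrM normfV (gtr0_norm Dpos).
have cE : sgn s * Dl / normB B z1 = Dl ^+ 2 / s.
  rewrite nz1 /sgn; have [sp|sn] := ltrP 0 s.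
    by rewrite (gtr0_norm sp); field; rewrite sn0 gt_eqF.
  have sneg : s < 0 by rewrite lt_def eq_sym sn0 sn.
  by rewrite (ltr0_norm sneg); field; rewrite sn0 gt_eqF.
have xE : x = - (Dl ^+ 2 / s) *: z1 by rewrite /x cE.
have Px : P ls *m x = - g.
  rewrite xE -scalemxAr Pz1 scalerA.
  have -> : - (Dl ^+ 2 / s) * (k * s) = -1 by rewrite /k; field; rewrite sn0 gt_eqF.
  by rewrite scaleN1r.
have bx : bil B x x = Dl ^+ 2.
  rewrite xE bilZZ bz1 /k; field; by rewrite sn0 gt_eqF.
have lspos : 0 < ls.
  have := Ppd ls lsgt w wn0; rewrite bilP -/kw; have := Hnsd w; nra.
have Pspsd : psd (P ls).
  move=> v; have := K1 v; have := Bpsd v; rewrite !bilP; nra.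
split; first by rewrite bx.
move=> y yB.
have h0 := Pspsd (y - x).
rewrite !(bilBl, bilBr) in h0.
have e1 : bil (P ls) y x = - dotv g y by rewrite bilE Px dotvNr dotvC.
have e2 : bil (P ls) x y = - dotv g y by rewrite (bil_sym _ _ _ (PT ls)) e1.
have e3 : bil (P ls) x x = - dotv g x by rewrite bilE Px dotvNr dotvC.
have e4 : bil (P ls) y y = bil H y y + ls * bil B y y by rewrite bilP.
have e5 : bil H x x = - dotv g x - ls * Dl ^+ 2.
  by rewrite -bx -e3 bilP addrK.
have e6 : ls * bil B y y <= ls * Dl ^+ 2 by rewrite ler_pM2l.
rewrite e1 e2 e3 e4 in h0.
rewrite e5; lra.
Qed.

End Trs.

Section Fin.
Context {R : realType}.

Lemma dotv_mullR {p q} (Q : 'M[R]_(p, q)) (u : 'cV[R]_q) (v : 'cV[R]_p) :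
  dotv (Q *m u) v = dotv u (Q^T *m v).
Proof. by rewrite /dotv trmx_mul mulmxA. Qed.

Lemma objE {M} (A : 'M[R]_M) (a t0 th : 'cV[R]_M) : A^T = A ->
  bil A th th - 2 * dotv a th =
  - (bil (- (2 *: A)) (th - t0) (th - t0) + 2 * dotv (2 *: a - 2 *: (A *m t0)) (th - t0)) / 2
  + (bil A t0 t0 - 2 * dotv a t0).
Proof.
move=> AT.
have h1 : dotv (A *m t0) th = bil A th t0 by rewrite dotvC bilE.
have h2 : dotv (A *m t0) t0 = bil A t0 t0 by rewrite dotvC bilE.
have h3 : bil A t0 th = bil A th t0 by rewrite (bil_sym _ _ _ AT).
rewrite !(bilBl, bilBr, bilMN, bilMZ, dotvBl, dotvBr, dotvZl, dotvZr) h1 h2 h3.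
by field.
Qed.

Lemma conE {M} (B : 'M[R]_M) (t0 th : 'cV[R]_M) : B^T = B ->
  bil B th th - 2 * dotv (B *m t0) th + bil B t0 t0 = bil B (th - t0) (th - t0).
Proof.
move=> BT.
have h1 : dotv (B *m t0) th = bil B th t0 by rewrite dotvC bilE.
have h3 : bil B t0 th = bil B th t0 by rewrite (bil_sym _ _ _ BT).
rewrite !(bilBl, bilBr) h1 h3; ring.
Qed.

End Fin.

Theorem theorem3 (R : realType) (X : Type) (kstar kh : X -> X -> R)
  (lam eps : R) (M n m m' : nat) (thstar : 'cV[R]_M)
  (xtr : 'I_M -> X) (xa : 'I_n -> X) (xobj : 'I_m -> X) (xcon : 'I_m' -> X)
  (alpha0 alphastar : R) (z : 'cV[R]_(M + M)) :
  pd_kernel kstar -> pd_kernel kh -> 0 < lam -> 0 <= eps ->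
  (0 < m)%N -> (0 < m')%N ->
  let f := kexp kstar xtr thstar in
  let K1 := gram kh xa xa in
  let K2 := gram kstar xa xtr in
  let K3 := gram kh xobj xa in
  let K4 := gram kstar xcon xtr in
  let f1 := evalv f xobj in
  let f2 := evalv f xcon in
  let At := K3 *m invmx (K1 + lam%:M) *m K2 in
  let A := (m%:R)^-1 *: (At^T *m At) in
  let a := (m%:R)^-1 *: (At^T *m f1) in
  let ga := (m%:R)^-1 * dotv f1 f1 in
  let B := (m'%:R)^-1 *: (K4^T *m K4) in
  let b := (m'%:R)^-1 *: (K4^T *m f2) in
  let gb := (m'%:R)^-1 * dotv f2 f2 in
  let ahat := 2%:R *: a - 2%:R *: (A *m invmx B *m b) in
  let Ahat := - (2%:R *: A) in
  let epshat := Num.sqrt (eps + qform (invmx B) b - gb) in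
  let L := block_mx (- B) Ahat Ahat (- ((epshat ^+ 2)^-1 *: (ahat *m ahat^T))) in
  let Rm := block_mx 0 B B 0 in
  let z1 : 'cV[R]_M := usubmx z in
  let z2 : 'cV[R]_M := dsubmx z in
  let thhat := - (sgn (dotv ahat z2) * epshat / normB B z1) *: z1 in
  let thopt := thhat + invmx B *m b in
  let obj th := qform A th - 2%:R * dotv a th + ga in
  let con th := qform B th - 2%:R * dotv b th + gb in
  posdef B ->
  (* alpha0 is the rightmost generalized eigenvalue of (Ahat, -B); Z its eigenspace *)
  (exists w, geneig Ahat (- B) alpha0 w) ->
  (forall beta w, geneig Ahat (- B) beta w -> beta <= alpha0) ->
  (* ahat is not orthogonal to Z *)
  (exists w, Ahat *m w = alpha0 *: (- B *m w) /\ dotv ahat w != 0) ->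
  (* alphastar is the smallest eigenvalue of the 2M x 2M pencil, with eigenvector z *)
  geneig L Rm alphastar z ->
  (forall beta w, geneig L Rm beta w -> alphastar <= beta) ->
  con thopt <= eps /\ (forall th, con th <= eps -> obj th <= obj thopt).

Proof.
move=> hk hkh lam0 eps0 m0 m'0 f K1 K2 K3 K4 f1 f2 At A a ga B b gb ahat Ahat
  epshat L Rm z1 z2 thhat thopt obj con [BT Bpd] _ a0max easy gen amin.
have AT : A^T = A by rewrite /A linearZ /= trmx_mul trmxK.
have HT : Ahat^T = Ahat by rewrite /Ahat linearN /= linearZ /= AT.
have Hnsd v : bil Ahat v v <= 0.
  rewrite /Ahat bilMN bilMZ /A bilMZ bilE -(mulmxA At^T At v) -dotv_mullR.
  rewrite oppr_le0; apply: mulr_ge0 => //; apply: mulr_ge0; last exact: dotv_ge0.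
  by rewrite invr_ge0.
have Bpd' : forall v, v != 0 -> 0 < bil B v v by exact: Bpd.
have f2E : f2 = K4 *m thstar.
  apply/matrixP => j i; rewrite (ord1 i) !mxE /f /kexp.
  by apply: eq_bigr => s _; rewrite !mxE mulrC.
have bE : b = B *m thstar by rewrite /b /B f2E -scalemxAl mulmxA.
have Bu : B \in unitmx by apply: pd_unit.
have c0 : invmx B *m b = thstar by rewrite bE mulKmx.
have gbE : gb = bil B thstar thstar.
  by rewrite /gb /B bilMZ f2E bilE -mulmxA -dotv_mullR.
have qbE : qform (invmx B) b = bil B thstar thstar.
  by rewrite qformE bilE c0 bE dotv_mull BT -bilE.
have epsE : epshat ^+ 2 = eps.
  rewrite /epshat -[X in _ = X](sqr_sqrtr eps0); congr (Num.sqrt _ ^+ 2).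
  rewrite qbE; lra.
have := @trs R M Ahat B ahat epshat alpha0 alphastar z HT BT Bpd' Hnsd
  (sqrtr_ge0 _) a0max easy gen amin.
rewrite epsE -/thhat => -[hx hopt].
have conE' th : con th = bil B (th - thstar) (th - thstar).
  have := conE B thstar th BT; rewrite -bE /con qformE; lra.
have thoptE : thopt - thstar = thhat by rewrite /thopt c0 addrK.
have ahatE : ahat = 2 *: a - 2 *: (A *m thstar) by rewrite /ahat -mulmxA c0.
split; first by rewrite conE' thoptE.
move=> th hth.
have hth' : bil B (th - thstar) (th - thstar) <= eps by rewrite -conE'.
have hy := hopt _ hth'.
rewrite /obj /qform.
have e1 := objE A a thstar th AT.
have e2 := objE A a thstar thopt AT.
rewrite -/(bil A th th) -/(bil A thopt thopt).
rewrite -ahatE -/Ahat in e1 e2.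
rewrite thoptE in e2.
lra.
Qed.
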